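(* There exist $\varepsilon_0>0$ and $n_0$ such that for every $\varepsilon\in(0,\varepsilon_0]$ and $n\ge n_0$ the following holds. Let $\hat G$ be an $\varepsilon$-superextremal two-clique on $n$ vertices with partition $V(\hat G)=A\uplus B$, and let $Z=\{f,f'\}$ where $f,f'$ are vertex-disjoint edges between $A$ and $B$, such that the set of edges of $\hat G$ between $A$ and $B$ is exactly $Z$. Let $\vec H$ be a directed Hamilton cycle of $\hat G$. Then for every $e\in E(H)\setminus Z$ there are at least $n^2/300$ pairs $(e',i)$ with $e'\in E(\hat G)\setminus E(H)$ and $i\in\{1,2\}$ such that the switching $s_i(\vec H;e,e')$ is admissible (with respect to $\hat G$).
   Context: $d(v,X)$ is the number of neighbours of $v$ in $X$. A graph on $n$ vertices is an $\varepsilon$-superextremal two-clique with partition $A\uplus B$ if: (A1) $||A|-|B||\le\varepsilon n$; (A2) $d(a,A)\ge(1/2-\varepsilon)n$ for all but at most $\varepsilon n$ vertices $a\in A$; (A3) $d(a,A)\ge(1/4-\varepsilon)n$ for all $a\in A$; (A4) $d(b,B)\ge(1/2-\varepsilon)n$ for all but at most $\varepsilon n$ vertices $b\in B$; (A5) $d(b,B)\ge(1/4-\varepsilon)n$ for all $b\in B$. A directed Hamilton cycle $\vec H$ is a Hamilton cycle $H$ with a cyclic orientation; its successor function $\pi$ sends $x$ to the head of the arc leaving $x$. For $e=x\pi(x)\in E(H)$ and $e'=x'y'\notin E(H)$ with endpoints labelled so that $x$ lies on the directed path of $\vec H$ from $y'$ to $x'$, let $H_1=(H-\{e,x'\pi(x'),\pi^{-1}(y')y'\})+\{e',x\pi(x'),\pi^{-1}(y')\pi(x)\}$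 and $H_2=(H-\{e,x'\pi(x'),\pi^{-1}(y')y'\})+\{e',x\pi^{-1}(y'),\pi(x)\pi(x')\}$; $s_i(\vec H;e,e')$ is $H_i$ oriented to contain the arc $(x',y')$. It is admissible (with respect to a graph $G$) if $H_i\subseteq G$. *)

(* Defs.v *)
From HB Require Import structures.
From mathcomp Require Import all_boot all_order all_algebra all_fingroup.
Set Implicit Arguments. Unset Strict Implicit. Unset Printing Implicit Defensive.
Import Order.TTheory GRing.Theory Num.Theory.

Section Defs.
Variable T : finType.

Definition simple_graph (adj : rel T) : Prop :=
  symmetric adj /\ irreflexive adj.

Definition deg (adj : rel T) (v : T) (X : {set T}) : nat :=
  #|[set u in X | adj v u]|.

Local Open Scope ring_scope.

Definition superextremal_two_clique (R : realFieldType) (eps : R)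
    (adj : rel T) (A B : {set T}) : Prop :=
  let n := #|T| in
  [/\ [disjoint A & B], A :|: B = [set: T] &
   [/\ `|(#|A|%:R - #|B|%:R : R)| <= eps * n%:R,
      (#|[set a in A | (deg adj a A)%:R < (2^-1 - eps) * n%:R]|%:R : R)
          <= eps * n%:R,
      (forall a, a \in A -> (4^-1 - eps) * n%:R <= (deg adj a A)%:R :> R),
      (#|[set b in B | (deg adj b B)%:R < (2^-1 - eps) * n%:R]|%:R : R)
          <= eps * n%:R
    & (forall b, b \in B -> (4^-1 - eps) * n%:R <= (deg adj b B)%:R :> R)]].

(* A directed Hamilton cycle, given by its successor permutation pi:
   pi has a single orbit (all of T) and every arc x -> pi x is an edge. *)
Definition directed_ham_cycle (adj : rel T) (pi : {perm T}) : Prop :=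
  (forall x y, fconnect pi x y) /\ (forall x, adj x (pi x)).

Definition upair (a b u v : T) : bool :=
  ((u == a) && (v == b)) || ((u == b) && (v == a)).

Definition edgeH (pi : {perm T}) (u v : T) : bool :=
  (pi u == v) || (pi v == u).

(* x lies on the directed path of H from y' to x' (endpoints included) *)
Definition on_path (pi : {perm T}) (y' x' x : T) : bool :=
  (findex pi y' x <= findex pi y' x')%N.

(* Edge sets of H_1 (i = false) and H_2 (i = true) for e = x pi(x),
   e' = x'y'. *)
Definition switched_edge (pi : {perm T}) (i : bool) (x x' y' : T)
    (u v : T) : bool :=
  let removed := [|| upair x (pi x) u v, upair x' (pi x') u v
                   | upair ((pi^-1)%g y') y' u v] in
  let added :=
    if ~~ i then [|| upair x' y' u v, upair x (pi x') u v
                   | upair ((pi^-1)%g y') (pi x) u v]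
    else [|| upair x' y' u v, upair x ((pi^-1)%g y') u v
           | upair (pi x) (pi x') u v] in
  (edgeH pi u v && ~~ removed) || added.

Definition admissible (adj : rel T) (pi : {perm T}) (i : bool)
    (x x' y' : T) : bool :=
  [forall u, forall v, switched_edge pi i x x' y' u v ==> adj u v].

End Defs.

(* Main.v *)
Require Import Defs.
From HB Require Import structures.
From mathcomp Require Import all_boot all_order all_algebra all_fingroup.
From mathcomp Require Import zify.
Import Order.TTheory GRing.Theory Num.Theory.
Set Implicit Arguments. Unset Strict Implicit.

Section Ord.
Variable T : finType.
Variable pi : {perm T}.
Hypothesis hc : forall x y, fconnect pi x y.

Lemma order_all y : fingraph.order pi y = #|T|.
Proof. rewrite /fingraph.order; apply: eq_card => z; rewrite !inE; exact: hc. Qed.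

Lemma iter_mod x k : iter k pi x = iter (k %% #|T|) pi x.
Proof.
rewrite {1}(divn_eq k #|T|) addnC iterD; congr (iter _ _ _).
elim: (k %/ #|T|) => [|q IH]; first by [].
by rewrite mulSn iterD IH -{1}(order_all x) fingraph.iter_order //; exact: perm_inj.
Qed.

Lemma n_gt0 : 0 < #|T| -> True. Proof. by []. Qed.

Lemma findex_rel x y z : findex pi y z = (findex pi x z + #|T| - findex pi x y) %% #|T|.
Proof.
have n0 : 0 < #|T| by rewrite -(order_all x) fingraph.order_gt0.
have hy : findex pi x y < #|T| by rewrite -(order_all x) findex_max.
set k := (_ %% _).
have kl : k < #|T| by rewrite ltn_mod.
rewrite -{1}(iter_findex (hc x z)) -{1}(iter_findex (hc x y)).
have -> : iter (findex pi x z) pi x = iter k pi (iter (findex pi x y) pi x).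
  rewrite -iterD (iter_mod _ (k + _)) [LHS](iter_mod _ (findex _ _ _)) /k modnDml.
  by rewrite subnK ?modnDr //; apply: leq_trans (ltnW hy) (leq_addl _ _).
by rewrite findex_iter // order_all.
Qed.

Lemma ord_lt x z : findex pi x z < #|T|.
Proof. by rewrite -(order_all x) findex_max. Qed.

Lemma ord_inj x y z : findex pi x y = findex pi x z -> y = z.
Proof. by move=> e; rewrite -(iter_findex (hc x y)) e iter_findex. Qed.

Lemma ord_succ x w : pi w != x -> findex pi x (pi w) = (findex pi x w).+1.
Proof.
move=> ne.
have h := ord_lt x w.
have e : pi w = iter (findex pi x w).+1 pi x by rewrite /= iter_findex.
rewrite e findex_iter ?order_all //.
rewrite ltn_neqAle h andbT; apply/negP => /eqP E.
move: ne; rewrite e E -(order_all x) fingraph.iter_order ?eqxx //; exact: perm_inj.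
Qed.

Lemma ord_x x : findex pi x x = 0.
Proof. exact: findex0. Qed.

Lemma path_lemma x a b :
  a != x -> pi b != x -> pi (pi b) != x ->
  findex pi x a <= findex pi x b ->
  ~~ edgeH pi ((pi^-1)%g a) (pi b) && on_path pi (pi b) ((pi^-1)%g a) x.
Proof.
move=> ax bx bbx le.
have oa0 : 0 < findex pi x a by rewrite lt0n findex_eq0 eq_sym.
have ob := ord_succ bx.
have obb := ord_succ bbx.
have hia : pi ((pi^-1)%g a) != x by rewrite permKV.
have oia := ord_succ hia; rewrite permKV in oia.
have l1 := ord_lt x (pi (pi b)).
have l2 := ord_lt x ((pi^-1)%g a).
rewrite /edgeH /on_path permKV !(findex_rel x (pi b)) ord_x.
apply/andP; split.
  apply/negP => /orP [] /eqP E.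
    by move: (congr1 (findex pi x) E); lia.
  by move: (congr1 (findex pi x) E); lia.
rewrite ob; rewrite obb in l1.
have -> : (0 + #|T| - (findex pi x b).+1) %% #|T| = #|T| - (findex pi x b).+1.
  by rewrite modn_small; lia.
rewrite modn_small; lia.
Qed.
End Ord.

Section Adm.
Variable T : finType.
Variable adj : rel T.
Hypothesis sym : symmetric adj.

Lemma upair_adj a b u v : adj a b -> upair a b u v -> adj u v.
Proof.
by move=> h /orP [] /andP [] /eqP -> /eqP ->; last rewrite sym.
Qed.

Lemma adm_lemma (pi : {perm T}) (i : bool) x x' y' :
  (forall z, adj z (pi z)) ->
  adj x' y' ->
  (if i then adj x ((pi^-1)%g y') && adj (pi x) (pi x')
   else adj x (pi x') && adj ((pi^-1)%g y') (pi x)) ->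
  admissible adj pi i x x' y'.
Proof.
move=> hp h1 h2; apply/forallP => u; apply/forallP => v; apply/implyP.
rewrite /switched_edge => /orP [/andP [he _] | ].
  by case/orP: he => /eqP <-; last rewrite sym.
case: i h2 => /= /andP [h2 h3] /or3P [] hh; apply: upair_adj hh => //.
Qed.
End Adm.

Lemma cardU_le (T : finType) (A B : {set T}) : #|A :|: B| <= #|A| + #|B|.
Proof. by rewrite cardsU leq_subr. Qed.

Lemma card_pairs (T : finType) (D : {set T * T}) (U : {set T}) (V : T -> {set T}) :
  (forall u v, ((u, v) \in D) = (u \in U) && (v \in V u)) ->
  #|D| = \sum_(u in U) #|V u|.
Proof.
move=> h.
rewrite -sum1_card big_mkcond /=.
rewrite (eq_big (fun p : T * T => xpredT p.1 && xpredT p.2) (fun p => (fun u v => if (u, v) \in D then 1 else 0) p.1 p.2)) //; last by case.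
rewrite -(pair_big xpredT xpredT (fun u v => if (u, v) \in D then 1 else 0)) /=.
rewrite [RHS]big_mkcond /=; apply: eq_big => // u _.
case: ifP => uU.
  rewrite -sum1_card [RHS]big_mkcond /=; apply: eq_big => // v _; by rewrite h uU.
by apply: big1 => v _; rewrite h uU.
Qed.

Section Core.
Variable T : finType.
Variable adj : rel T.
Variables (X : {set T}) (c1 c2 : T) (pi : {perm T}) (x : T).
Hypothesis sym : symmetric adj.
Hypothesis irr : irreflexive adj.
Hypothesis hp : forall z, adj z (pi z).
Hypothesis hc : forall y z, fconnect pi y z.
Hypothesis xX : x \in X.
Hypothesis pxX : pi x \in X.
Hypothesis cross : forall u w, u \in X -> w \notin X -> adj u w -> (u == c1) || (u == c2).
Hypothesis hdeg : forall a, a \in X -> 249 * #|T| <= 1000 * deg adj a X.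
Hypothesis hbad : 1000 * #|[set a in X | 1000 * deg adj a X < 499 * #|T|]| <= #|T|.
Hypothesis hX : 2000 * #|X| <= 1001 * #|T|.
Hypothesis hn : 10 * 1000 <= #|T|.

Definition W := [set a in X | 499 * #|T| <= 1000 * deg adj a X].
Definition E := [set x; (pi^-1)%g x; (pi^-1)%g ((pi^-1)%g x)].
Definition good y u := [&& u \in X, adj y u, pi u \in W, (pi^-1)%g u \in W & u \notin E].
Definition Pr u v := adj ((pi^-1)%g u) (pi v) && adj ((pi^-1)%g v) (pi u).
Definition U := [set u | good x u].
Definition V := [set v | good (pi x) v].
Definition D := [set p : T * T | [&& p.1 \in U, p.2 \in V & Pr p.1 p.2]].
Definition F (p : T * T) : T * T * bool :=
  if findex pi x p.1 <= findex pi x p.2 then ((pi^-1)%g p.1, pi p.2, false)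
  else ((pi^-1)%g p.2, pi p.1, true).
Definition S := [set t : T * T * bool |
           let: (x', y', i) := t in
           [&& adj x' y', ~~ edgeH pi x' y', on_path pi y' x' x
             & admissible adj pi i x x' y'] ].

Lemma notE z : z \notin E -> [/\ z != x, pi z != x & pi (pi z) != x].
Proof.
rewrite /E !inE !negb_or => /andP [/andP [h1 h2] h3]; split => //.
  by apply: contra h2 => /eqP <-; rewrite permK.
by apply: contra h3 => /eqP <-; rewrite !permK.
Qed.

Lemma D_S : #|D| <= #|S|.
Proof.
have inj : {in D &, injective F}.
  move=> [u1 v1] [u2 v2] _ _; rewrite /F /=.
  case: ifP; case: ifP => // _ _ [] /perm_inj -> /perm_inj -> //.
rewrite -(card_in_imset inj); apply: subset_leq_card; apply/subsetP => t.
case/imsetP => [[u v]]; rewrite !inE /= /good => /and3P [].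
move=> /and5P [uX xu _ _ uE] /and5P [vX pxv _ _ vE] /andP [p1 p2] ->.
have [ux pux ppux] := notE uE.
have [vx pvx ppvx] := notE vE.
have eq_ltnN a b : (a <= b) = false -> b < a by move=> h; rewrite ltnNge h.
rewrite /F /=; case: ifP => le.
  rewrite p1 /=; have /andP [-> ->] /= := path_lemma hc ux pvx ppvx le.
  by rewrite adm_lemma //= permKV permK xu /= sym.
rewrite p2 /=; have /andP [-> ->] /= := path_lemma hc vx pux ppux (ltnW (eq_ltnN _ _ le)).
by rewrite adm_lemma //= permKV permK xu.
Qed.

Lemma NN_bound w : w \in W -> 2000 * #|[set z in X | ~~ adj w z]| <= 3 * #|T|.
Proof.
rewrite /W inE => /andP [wX hw].
have := cardsID [set z | adj w z] X.
have -> : X :&: [set z | adj w z] = [set u in X | adj w u].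
  by apply/setP => z; rewrite !inE.
have -> : X :\: [set z | adj w z] = [set z in X | ~~ adj w z].
  by apply/setP => z; rewrite !inE andbC.
rewrite -/(deg adj w X) => e.
lia.
Qed.

Lemma inner u : u \in U ->
  #|V| <= #|[set v in V | Pr u v]| + #|[set z in X | ~~ adj ((pi^-1)%g u) z]|
          + #|[set z in X | ~~ adj (pi u) z]|.
Proof.
move=> uU.
set A1 := [set z in X | ~~ adj ((pi^-1)%g u) z].
set A2 := [set z in X | ~~ adj (pi u) z].
have sub : V \subset [set v in V | Pr u v] :|: (pi @^-1: A1) :|: ((pi^-1)%g @^-1: A2).
  apply/subsetP => v vV.
  have := vV; rewrite /V inE /good => /and5P [_ _ pvW ivW _].
  rewrite /W in pvW ivW; case/setIdP: pvW => pvX _; case/setIdP: ivW => ivX _.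
  have vV' := vV; rewrite /V inE /good /W /E !inE in vV'.
  rewrite !inE vV' /Pr /=; case: (boolP (adj _ (pi v))) => h1 /=; last by rewrite pvX.
  case: (boolP (adj _ (pi u))) => h2 //=.
  by rewrite ivX sym h2 !orbT.
apply: leq_trans (subset_leq_card sub) _.
apply: leq_trans (cardU_le _ _) _; apply: leq_add.
  apply: leq_trans (cardU_le _ _) _; apply: leq_add => //.
  by rewrite card_preimset //; exact: perm_inj.
by rewrite card_preimset //; exact: perm_inj.
Qed.

Lemma UV_D : 2000 * (#|U| * #|V|) <= 2000 * #|D| + 6 * #|T| * #|U|.
Proof.
have hD : #|D| = \sum_(u in U) #|[set v in V | Pr u v]|.
  by apply: card_pairs => u v; rewrite !inE.
set k2 := (6 * #|T|) %/ 2000.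
have hc2 : k2 * 2000 <= 6 * #|T| by apply: leq_trunc_div.
have hs : #|U| * #|V| <= #|D| + #|U| * k2.
  rewrite -sum_nat_const hD -sum_nat_const -big_split /=.
  apply: leq_sum => u uU.
  apply: leq_trans (inner uU) _; rewrite -addnA leq_add2l.
  have uU' := uU; rewrite /U inE /good in uU'.
  case/and5P: uU' => _ _ pW iW _.
  have h1 := NN_bound iW; have h2 := NN_bound pW.
  rewrite leq_divRL //; lia.
have : #|U| * (k2 * 2000) <= #|U| * (6 * #|T|) by apply: leq_mul.
nia.
Qed.

Lemma U_bound y : deg adj y X <= #|[set u | good y u]| + 2 * #|X :\: W| + 7.
Proof.
have sub : [set u in X | adj y u] \subset
   [set u | good y u] :|: (pi @^-1: (X :\: W)) :|: ((pi^-1)%g @^-1: (X :\: W))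
   :|: [set c1; c2] :|: E.
  apply/subsetP => u; rewrite inE => /andP [uX yu].
  rewrite in_setU.
  case: (boolP (u \in E)) => uE; first by apply/orP; right.
  apply/orP; left.
  have hpu : adj u (pi u) := hp u.
  have hiu : adj u ((pi^-1)%g u) by rewrite sym -{2}(permKV pi u) hp.
  case: (boolP (pi u \in W)) => pW; last first.
    case: (boolP (pi u \in X)) => pX.
      by rewrite !inE pX; move: pW; rewrite /W inE pX /= => ->; rewrite !orbT.
    by rewrite !inE (cross uX pX hpu) !orbT.
  case: (boolP ((pi^-1)%g u \in W)) => iW; last first.
    case: (boolP ((pi^-1)%g u \in X)) => iX.
      by rewrite !inE iX; move: iW; rewrite /W inE iX /= => ->; rewrite !orbT.
    by rewrite !inE (cross uX iX hiu) !orbT.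
  by rewrite !in_setU in_set /good uX yu pW iW uE.
apply: leq_trans (subset_leq_card sub) _.
apply: leq_trans (cardU_le _ _) _.
have cE : #|E| <= 3.
  rewrite /E; apply: leq_trans (cardU_le _ _) _; rewrite cards1 cards2; by case: (_ != _).
have cc : #|[set c1; c2]| <= 2 by rewrite cards2; case: (_ != _).
have : #|[set u | good y u] :|: pi @^-1: (X :\: W) :|: (pi^-1)%g @^-1: (X :\: W) :|: [set c1; c2]|
   <= #|[set u | good y u]| + #|X :\: W| + #|X :\: W| + 2.
  apply: leq_trans (cardU_le _ _) _; apply: leq_add => //.
  apply: leq_trans (cardU_le _ _) _; rewrite card_preimset; last exact: perm_inj.
  apply: leq_add => //.
  apply: leq_trans (cardU_le _ _) _; rewrite card_preimset; last exact: perm_inj.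
  done.
lia.
Qed.

Lemma core_count : #|T| ^ 2 <= 300 * #|S|.
Proof.
have hq : 1000 * #|X :\: W| <= #|T|.
  have e : X :\: W = [set a in X | 1000 * deg adj a X < 499 * #|T|].
    by apply/setP => z; rewrite !inE; case: (z \in X) => /=; rewrite ?andbT ?ltnNge.
  by rewrite e.
have ha := U_bound x; have hb := U_bound (pi x).
have dx := hdeg xX; have dpx := hdeg pxX.
have hUV := UV_D; have hDS := D_S.
have aT : #|U| <= #|T| by apply: max_card.
rewrite -/U -/V in ha hb.
set a := #|U| in ha hUV aT *; set b := #|V| in hb hUV *.
set q := #|X :\: W| in hq ha hb.
set d := #|D| in hUV hDS *; set s := #|S| in hDS *.
have hn' := hn.
set n := #|T| in hq ha hb dx dpx hUV aT hn' *.
have h1 : 246 * n <= 1000 * a by lia.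
have h2 : 246 * n <= 1000 * b by lia.
have h3 : (246 * n) * (246 * n) <= (1000 * a) * (1000 * b) by apply: leq_mul.
have h4 : n * a <= n * n by rewrite leq_mul2l aT orbT.
rewrite -mulnn in h4 *; lia.
Qed.
End Core.

Unset Implicit Arguments.
From mathcomp Require Import ring lra.
Local Open Scope ring_scope.

Section Real.
Variable R : realFieldType.

Lemma eps_n (eps : R) (n : nat) : eps <= 1000^-1 -> eps * n%:R <= n%:R / 1000.
Proof.
move=> h; rewrite mulrC; apply: ler_wpM2l => //.
Qed.

Lemma deg_conv (eps : R) (n d : nat) : 0 < eps -> eps <= 1000^-1 ->
  (4^-1 - eps) * n%:R <= d%:R -> (249 * n <= 1000 * d)%N.
Proof.
move=> e0 e1 h; have := eps_n eps n e1 => h2.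
rewrite -(ler_nat R) !natrM.
have hn : 0 <= n%:R :> R by [].
lra.
Qed.

Lemma bad_conv (eps : R) (n d : nat) : eps <= 1000^-1 ->
  (1000 * d < 499 * n)%N -> d%:R < (2^-1 - eps) * n%:R.
Proof.
move=> e1; rewrite -(ltr_nat R) !natrM => h.
have := eps_n eps n e1 => h2; lra.
Qed.

Lemma card_conv (eps : R) (n c : nat) : eps <= 1000^-1 ->
  c%:R <= eps * n%:R -> (1000 * c <= n)%N.
Proof.
move=> e1 h; have := eps_n eps n e1 => h2.
rewrite -(ler_nat R) natrM; lra.
Qed.

Lemma part_conv (eps : R) (n a b : nat) : eps <= 1000^-1 -> (a + b)%N = n ->
  `|a%:R - b%:R| <= eps * n%:R -> (2000 * a <= 1001 * n)%N /\ (2000 * b <= 1001 * n)%N.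
Proof.
move=> e1 hab; rewrite ler_norml => /andP [h1 h2].
have := eps_n eps n e1 => h3.
have hn : n%:R = a%:R + b%:R :> R by rewrite -hab natrD.
split; rewrite -(ler_nat R) !natrM; lra.
Qed.
End Real.

Theorem mainTheorem9 (R : realFieldType) :
  exists (eps0 : R) (n0 : nat), 0 < eps0 /\
  forall (eps : R) (T : finType) (adj : rel T) (A B : {set T})
         (a1 b1 a2 b2 : T) (pi : {perm T}) (x : T),
    0 < eps -> eps <= eps0 -> (n0 <= #|T|)%N ->
    simple_graph adj ->
    superextremal_two_clique eps adj A B ->
    a1 \in A -> a2 \in A -> b1 \in B -> b2 \in B ->
    a1 != a2 -> b1 != b2 ->
    (forall a b, a \in A -> b \in B ->
       adj a b = ((a == a1) && (b == b1)) || ((a == a2) && (b == b2))) ->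
    directed_ham_cycle adj pi ->
    ~~ upair a1 b1 x (pi x) -> ~~ upair a2 b2 x (pi x) ->
    ((#|T| ^ 2)%:R / 300 : R) <=
      (#|[set t : T * T * bool |
           let: (x', y', i) := t in
           [&& adj x' y', ~~ edgeH pi x' y', on_path pi y' x' x
             & admissible adj pi i x x' y'] ]|)%:R :> R.
Proof.
exists 1000^-1, (10 * 1000)%N; split; first by rewrite invr_gt0.
move=> eps T adj A B a1 b1 a2 b2 pi x e0 e1 hn [sym irr] [dAB UAB [h1 h2 h3 h4 h5]].
move=> a1A a2A b1B b2B _ _ hadj [hc hp] u1 u2.
have hAB : (#|A| + #|B|)%N = #|T|.
  rewrite -cardsT -UAB cardsU.
  by move: dAB; rewrite -setI_eq0 => /eqP ->; rewrite cards0 subn0.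
have [hA hB] := part_conv _ _ _ _ _ e1 hAB h1.
have inB z : z \notin A -> z \in B.
  move=> zA; have : z \in A :|: B by rewrite UAB in_setT.
  by rewrite inE (negbTE zA).
have inA z : z \notin B -> z \in A.
  move=> zB; have : z \in A :|: B by rewrite UAB in_setT.
  by rewrite inE (negbTE zB) orbF.
have key : (#|T| ^ 2 <= 300 * #|S adj pi x|)%N.
  case: (boolP (x \in A)) => xA.
    apply: (core_count (X:=A) (c1:=a1) (c2:=a2)) => //.
    - apply: contraR u1 => /inB pB.
      move: (hp x); rewrite hadj // => /orP [/andP [/eqP ea /eqP eb] | /andP [/eqP ea /eqP eb]].
        by rewrite /upair eb ea !eqxx.
      by move: u2; rewrite /upair eb ea !eqxx.
    all: try done.
    - move=> u w uA /inB wB; rewrite hadj // => /orP [/andP [-> _] | /andP [-> _]]; by rewrite ?orbT.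
    - by move=> a aA; exact: deg_conv _ _ _ _ e0 e1 (h3 a aA).
    - refine (card_conv _ _ _ _ e1 _); apply: le_trans h2; rewrite ler_nat.
      apply: subset_leq_card; apply/subsetP => a; rewrite !inE => /andP [-> h] /=.
      exact: bad_conv _ _ _ _ e1 h.
  have xB := inB _ xA.
  apply: (core_count (X:=B) (c1:=b1) (c2:=b2)) => //.
  - apply: contraR u1 => /inA pA.
    move: (hp x); rewrite sym hadj // => /orP [/andP [/eqP ea /eqP eb] | /andP [/eqP ea /eqP eb]].
      by rewrite /upair ea eb !eqxx orbT.
    by move: u2; rewrite /upair ea eb !eqxx orbT.
  - move=> u w uB /inA wA; rewrite sym hadj // => /orP [/andP [_ ->] | /andP [_ ->]]; by rewrite ?orbT.
  - by move=> a aB; exact: deg_conv _ _ _ _ e0 e1 (h5 a aB).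
  - refine (card_conv _ _ _ _ e1 _); apply: le_trans h4; rewrite ler_nat.
    apply: subset_leq_card; apply/subsetP => a; rewrite !inE => /andP [-> h] /=.
    exact: bad_conv _ _ _ _ e1 h.
rewrite ler_pdivrMr // -natrM ler_nat mulnC.
exact: key.
Qed.
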